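(* Let $G=\langle a_1,a_2,\dots,a_n\rangle$ be a finite semi-3-abelian 3-group with $|G/\Phi(G)|=3^{n}$. Then $\Omega_{1}(G)\le Z_{n+1}(G)$. Moreover, if $x=a_i^{m}\in\Omega_{1}(G)$ for some $1\le i\le n$ and some positive integer $m$, then $x\in Z_{n}(G)$.
   Context: A finite 3-group $G$ is semi-3-abelian if for all $a,b\in G$: $(ab)^{3}=1$ if and only if $a^{3}b^{3}=1$. $\Omega_{1}(G)=\langle g\in G : g^{3}=1\rangle$. $\Phi(G)$ is the Frattini subgroup and $Z_k(G)$ is the $k$-th term of the upper central series ($Z_0=1$, $Z_{k+1}/Z_k=Z(G/Z_k)$). *)

(* Defs.v *)
From mathcomp Require Import all_boot all_fingroup all_solvable.
Set Implicit Arguments. Unset Strict Implicit. Unset Printing Implicit Defensive.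
Local Open Scope group_scope.

Definition semi3abelian (gT : finGroupType) (G : {set gT}) : Prop :=
  forall a b, a \in G -> b \in G -> ((a * b) ^+ 3 == 1) = (a ^+ 3 * b ^+ 3 == 1).

Definition Omega1_3 (gT : finGroupType) (G : {set gT}) : {set gT} :=
  <<[set g in G | g ^+ 3 == 1]>>.

(* Main.v *)
Require Import Defs.
From mathcomp Require Import all_boot all_fingroup all_solvable.
From mathcomp Require Import zify.
Set Implicit Arguments. Unset Strict Implicit. Unset Printing Implicit Defensive.
Local Open Scope group_scope.

Lemma semi_cube (gT : finGroupType) (G : {group gT}) w h :
  semi3abelian G -> w \in G -> w ^+ 3 = 1 -> h \in G -> (w * h) ^+ 3 = h ^+ 3.
Proof.
move=> sG Gw w3 Gh.
have Gwh : w * h \in G by rewrite groupM.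
have Ghi : h^-1 \in G by rewrite groupV.
have := sG (w * h) h^-1 Gwh Ghi.
rewrite mulgK w3 eqxx => E.
have E' : ((w * h) ^+ 3 * h^-1 ^+ 3 == 1) by rewrite -E.
move: E'; rewrite mulg_eq1 => /eqP ->.
by rewrite expgVn invgK.
Qed.

Lemma semi_I (gT : finGroupType) (G : {group gT}) w g :
  semi3abelian G -> w \in G -> w ^+ 3 = 1 -> g \in G -> w * w ^ g * w ^ (g * g) = 1.
Proof.
move=> sG Gw w3 Gg.
have Ggi : g^-1 \in G by rewrite groupV.
have := semi_cube sG Gw w3 Ggi.
rewrite !expgS expg0 !mulg1 => E.
have -> : w * w ^ g * w ^ (g * g) =
   ((w * g^-1) * ((w * g^-1) * (w * g^-1))) * (g * g * g).
  by rewrite !conjgE ?invMg !mulgA ?(mulgK, mulgVK).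
by rewrite E ?invMg !mulgA ?(mulgK, mulgVK, mulVg, mul1g).
Qed.

Lemma semi_comm (gT : finGroupType) (G : {group gT}) w g :
  semi3abelian G -> w \in G -> w ^+ 3 = 1 -> g \in G -> commute w (w ^ g).
Proof.
move=> sG Gw w3 Gg.
have E1 := semi_I sG Gw w3 Gg.
have Gwg : w * g \in G by rewrite groupM.
have E2 := semi_I sG Gw w3 Gwg.
have ww : w ^ w = w by rewrite conjgE mulKg.
rewrite !conjgM ww in E2; rewrite conjgM in E1.
have : ((w ^ g) ^ w) ^ g = (w ^ g) ^ g.
  by apply: (mulgI (w * w ^ g)); rewrite E1 E2.
move/conjg_inj => H.
have : [~ w ^ g, w] == 1 by apply/conjg_fixP.
by move/commgP/commute_sym.
Qed.

Lemma semi_diag (gT : finGroupType) (G : {group gT}) w g :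
  semi3abelian G -> w \in G -> w ^+ 3 = 1 -> g \in G -> [~ w, g, g] = 1.
Proof.
move=> sG Gw w3 Gg.
have E1 := semi_I sG Gw w3 Gg.
have C := semi_comm sG Gw w3 Gg.
rewrite conjgM in E1.
have Y2 : (w ^ g) ^ g = (w * w ^ g)^-1 by apply/esym/mulg1_eq.
have y3 : (w ^ g) ^+ 3 = 1 by rewrite -conjXg w3 conj1g.
apply/eqP; apply/conjg_fixP.
rewrite commgEl conjMg conjVg Y2.
move: (w ^ g) C y3 => y C y3.
have yy : y^-1 * y^-1 = y.
  rewrite -invMg; apply: mulg1_eq; move: y3; rewrite !expgS expg0 mulg1.
  by rewrite mulgA.
rewrite invMg mulgA yy.
have Cv : commute y w^-1 by apply: commuteV; apply: commute_sym.
by rewrite Cv.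
Qed.

Definition cs (gT : finGroupType) (v : gT) (hs : seq gT) :=
  foldl (fun w h => [~ w, h]) v hs.

Lemma cs_cons (gT : finGroupType) (v h : gT) s : cs v (h :: s) = cs [~ v, h] s.
Proof. by []. Qed.

Lemma cs_nil (gT : finGroupType) (v : gT) : cs v [::] = v.
Proof. by []. Qed.

Lemma cs_cat (gT : finGroupType) (v : gT) s1 s2 : cs v (s1 ++ s2) = cs (cs v s1) s2.
Proof. exact: foldl_cat. Qed.

Lemma cs1 (gT : finGroupType) (hs : seq gT) : cs 1 hs = 1.
Proof. by elim: hs => //= h t IH; rewrite comm1g. Qed.

Lemma cs_in (gT : finGroupType) (G N : {group gT}) v hs :
  G \subset 'N(N) -> v \in N -> all (fun h => h \in G) hs -> cs v hs \in N.
Proof.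
move=> nNG; elim: hs v => //= h t IH v Nv /andP[Gh Gt]; apply: IH => //.
rewrite commgEl groupM ?groupV // memJ_norm //; exact: (subsetP nNG).
Qed.

Lemma cs_mul (gT : finGroupType) (G N : {group gT}) u v hs :
  G \subset 'N(N) -> abelian N -> u \in N -> v \in N -> all (fun h => h \in G) hs ->
  cs (u * v) hs = cs u hs * cs v hs.
Proof.
move=> nNG abN; elim: hs u v => //= h t IH u v Nu Nv /andP[Gh Gt].
have Nc : forall w, w \in N -> [~ w, h] \in N.
  move=> w Nw; rewrite commgEl groupM ?groupV // memJ_norm //; exact: (subsetP nNG).
rewrite commMgJ.
have -> : [~ u, h] ^ v = [~ u, h].
  apply/conjg_fixP/commgP; exact: (centsP abN _ (Nc _ Nu) _ Nv).
by rewrite IH ?Nc.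
Qed.

Arguments cs : simpl never.

Definition Dm (gT : finGroupType) (G N : {group gT}) m :=
  forall v hs, v \in N -> all (fun h => h \in G) hs -> size hs = m -> cs v hs = 1.

Lemma slot_hom (gT : finGroupType) (G N : {group gT}) m v pre post g h :
  G \subset 'N(N) -> abelian N -> Dm G N m.+1 -> v \in N ->
  all (fun h => h \in G) pre -> all (fun h => h \in G) post -> g \in G -> h \in G ->
  size (pre ++ g :: post) = m ->
  cs v (pre ++ g * h :: post) = cs v (pre ++ g :: post) * cs v (pre ++ h :: post).
Proof.
move=> nNG abN D Nv Gpre Gpost Gg Gh sz.
have Nc : forall w k, w \in N -> k \in G -> [~ w, k] \in N.
  move=> w k Nw Gk; rewrite commgEl groupM ?groupV // memJ_norm //; exact: (subsetP nNG).
have Nw : cs v pre \in N by exact: (cs_in nNG Nv Gpre).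
rewrite !cs_cat !cs_cons; set w := cs v pre in Nw *.
rewrite commgMJ.
have -> : [~ w, g] ^ h = [~ w, g] * [~ w, g, h] by rewrite [[~ _, g, h]]commgEl mulKVg.
have E : cs [~ w, g, h] post = 1.
  have := D v (pre ++ g :: h :: post) Nv.
  rewrite cs_cat !cs_cons -/w; apply.
    by rewrite all_cat /= Gpre Gg Gh Gpost.
  by rewrite -sz !size_cat /= addnS.
have Nwg := Nc _ _ Nw Gg; have Nwh := Nc _ _ Nw Gh.
have Nwgh := Nc _ _ Nwg Gh.
have Np : [~ w, g] * [~ w, g, h] \in N by apply: groupM.
rewrite (cs_mul nNG abN Nwh Np Gpost).
rewrite (cs_mul nNG abN Nwg Nwgh Gpost) E mulg1.
have Ncs : forall u, u \in N -> cs u post \in N by move=> u Nu; exact: (cs_in nNG Nu Gpost).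
exact: (centsP abN _ (Ncs _ (Nc _ _ Nw Gh)) _ (Ncs _ (Nc _ _ Nw Gg))).
Qed.

Lemma cs_diag (gT : finGroupType) (G N : {group gT}) v pre k post :
  G \subset 'N(N) -> (forall w k, w \in N -> k \in G -> [~ w, k, k] = 1) ->
  v \in N -> all (fun h => h \in G) pre -> k \in G ->
  cs v (pre ++ k :: k :: post) = 1.
Proof.
move=> nNG diagN Nv Gpre Gk.
by rewrite cs_cat !cs_cons diagN ?cs1 // (cs_in nNG Nv Gpre).
Qed.

Lemma cs_swap (gT : finGroupType) (G N : {group gT}) m v pre post g h :
  G \subset 'N(N) -> abelian N ->
  (forall w k, w \in N -> k \in G -> [~ w, k, k] = 1) -> Dm G N m.+1 -> v \in N ->
  all (fun h => h \in G) pre -> all (fun h => h \in G) post -> g \in G -> h \in G ->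
  (size pre + size post).+2 = m ->
  cs v (pre ++ g :: h :: post) = (cs v (pre ++ h :: g :: post))^-1.
Proof.
move=> nNG abN diagN D Nv Gpre Gpost Gg Gh sz.
pose phi a b := cs v (pre ++ a :: b :: post).
have hom1 : forall a b c, a \in G -> b \in G -> c \in G ->
    phi (a * b) c = phi a c * phi b c.
  move=> a b c Ga Gb Gc; rewrite /phi.
  apply: (slot_hom nNG abN D) => //=; first by rewrite Gc Gpost.
  by rewrite !size_cat /= -sz !addnS.
have hom2 : forall a b c, a \in G -> b \in G -> c \in G ->
    phi a (b * c) = phi a b * phi a c.
  move=> a b c Ga Gb Gc; rewrite /phi.
  have Ec : forall x, pre ++ a :: x :: post = rcons pre a ++ x :: post.
    by move=> x; rewrite cat_rcons.
  rewrite !Ec.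
  apply: (slot_hom nNG abN D) => //=; first by rewrite all_rcons Ga Gpre.
  by rewrite !size_cat size_rcons /= -sz addSn addnS.
have dg : forall a, a \in G -> phi a a = 1.
  by move=> a Ga; rewrite /phi (@cs_diag _ G N v pre a post nNG diagN Nv Gpre Ga).
have Ggh : g * h \in G by rewrite groupM.
have E : phi g h * phi h g = 1.
  have := dg _ Ggh; rewrite hom1 // !hom2 // !dg // mulg1 mul1g.
  by [].
have := mulg1_eq E; rewrite /phi => <-; by rewrite invgK.
Qed.

Lemma cs_repeat (gT : finGroupType) (G N : {group gT}) m v y mid :
  G \subset 'N(N) -> abelian N ->
  (forall w k, w \in N -> k \in G -> [~ w, k, k] = 1) -> Dm G N m.+1 -> v \in N ->
  y \in G -> all (fun h => h \in G) mid ->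
  forall pre post, all (fun h => h \in G) pre -> all (fun h => h \in G) post ->
  size (pre ++ y :: mid ++ y :: post) = m ->
  cs v (pre ++ y :: mid ++ y :: post) = 1.
Proof.
move=> nNG abN diagN D Nv Gy.
elim/last_ind: mid => [|mid z IH] Gmid pre post Gpre Gpost sz.
  by rewrite cat0s (@cs_diag _ G N v pre y post nNG diagN Nv Gpre Gy).
move: Gmid; rewrite all_rcons => /andP[Gz Gmid].
rewrite cat_rcons -cat_cons catA.
rewrite (cs_swap nNG abN diagN D Nv) //; last first.
- by move: sz; rewrite !size_cat /= ?size_cat /= ?size_rcons /= ?size_cat /=; lia.
- by rewrite all_cat /= Gpre Gy Gmid.
rewrite -catA cat_cons IH ?invg1 //= ?Gz //.
by move: sz; rewrite !size_cat /= ?size_cat /= ?size_rcons /= ?size_cat /=; lia.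
Qed.

Lemma cs_front (gT : finGroupType) (G N : {group gT}) m v y :
  G \subset 'N(N) -> abelian N ->
  (forall w k, w \in N -> k \in G -> [~ w, k, k] = 1) -> Dm G N m.+1 -> v \in N ->
  y \in G -> [~ v, y] = 1 ->
  forall pre post, all (fun h => h \in G) pre -> all (fun h => h \in G) post ->
  size (pre ++ y :: post) = m ->
  cs v (pre ++ y :: post) = 1.
Proof.
move=> nNG abN diagN D Nv Gy vy.
elim/last_ind => [|pre z IH] post Gpre Gpost sz.
  by rewrite cat0s cs_cons vy cs1.
move: Gpre; rewrite all_rcons => /andP[Gz Gpre].
rewrite cat_rcons (cs_swap nNG abN diagN D Nv) //; last first.
  by move: sz; rewrite !size_cat /= ?size_cat /= ?size_rcons /= ?size_cat /=; lia.
rewrite IH ?invg1 //= ?Gz //.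
by move: sz; rewrite !size_cat /= ?size_cat /= ?size_rcons /= ?size_cat /=; lia.
Qed.

Lemma all_map_in (gT : finGroupType) (G : {group gT}) n (a : 'I_n -> gT) s :
  (forall i, a i \in G) -> all (fun h => h \in G) (map a s).
Proof. by move=> Ga; apply/allP => _ /mapP[j _ ->]. Qed.

Lemma cs_notuniq (gT : finGroupType) (G N : {group gT}) m v n (a : 'I_n -> gT) :
  G \subset 'N(N) -> abelian N ->
  (forall w k, w \in N -> k \in G -> [~ w, k, k] = 1) -> Dm G N m.+1 -> v \in N ->
  (forall i, a i \in G) ->
  forall w pre, ~~ uniq w -> all (fun h => h \in G) pre ->
  size (pre ++ map a w) = m -> cs v (pre ++ map a w) = 1.
Proof.
move=> nNG abN diagN D Nv Ga.
elim=> [|i w IH] pre //= nu Gpre sz.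
case iw: (i \in w).
  case/splitPr: iw sz => p1 p2 sz.
  rewrite map_cat /= (cs_repeat nNG abN diagN D Nv) ?all_map_in //.
  by move: sz; rewrite map_cat.
move: nu; rewrite iw /= => nu.
rewrite -cat_rcons IH // ?all_rcons ?Ga //.
by move: sz; rewrite !size_cat /= ?size_rcons /=; lia.
Qed.

Lemma cs_ext (gT : finGroupType) (G N : {group gT}) m v n (a : 'I_n -> gT) :
  G \subset 'N(N) -> abelian N -> Dm G N m.+1 -> v \in N ->
  (forall i, a i \in G) -> G :=: <<[set a i | i : 'I_n]>> ->
  (forall w : seq 'I_n, size w = m -> cs v (map a w) = 1) ->
  forall hs, all (fun h => h \in G) hs -> size hs = m -> cs v hs = 1.
Proof.
move=> nNG abN D Nv Ga hgen base.
suff S : forall pre, all (fun h => h \in G) pre -> forall post : seq 'I_n,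
    size (pre ++ map a post) = m -> cs v (pre ++ map a post) = 1.
  by move=> hs Ghs sz; have := S hs Ghs [::]; rewrite cats0; apply.
elim/last_ind => [|p h IH].
  by move=> _ post; rewrite cat0s size_map; apply: base.
rewrite all_rcons => /andP[Gh Gp] post sz.
rewrite cat_rcons.
pose H := [set x in G | cs v (p ++ x :: map a post) == 1].
have gH : group_set H.
  apply/group_setP; split.
    by rewrite inE group1 cs_cat cs_cons commg1 cs1 eqxx.
  move=> x y; rewrite !inE => /andP[Gx /eqP Ex] /andP[Gy /eqP Ey].
  rewrite groupM //= (slot_hom nNG abN D Nv Gp (all_map_in _ Ga) Gx Gy) ?Ex ?Ey ?mulg1 //.
  by move: sz; rewrite !size_cat /= ?size_rcons addSnnS.
have sGH : G \subset Group gH.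
  rewrite hgen gen_subG; apply/subsetP => _ /imsetP[i _ ->].
  rewrite inE Ga /=; apply/eqP.
  have := IH Gp (i :: post); rewrite map_cons; apply.
  by move: sz; rewrite !size_cat /= ?size_rcons /=; lia.
by have := subsetP sGH h Gh; rewrite inE Gh => /eqP.
Qed.

Lemma cs_step (gT : finGroupType) (G N : {group gT}) m n (a : 'I_n -> gT) :
  G \subset 'N(N) -> abelian N ->
  (forall w k, w \in N -> k \in G -> [~ w, k, k] = 1) ->
  (forall i, a i \in G) -> G :=: <<[set a i | i : 'I_n]>> ->
  n < m -> Dm G N m.+1 -> Dm G N m.
Proof.
move=> nNG abN diagN Ga hgen nm D v hs Nv Ghs sz.
apply: (cs_ext nNG abN D Nv Ga hgen _ Ghs sz) => w szw.
have := cs_notuniq nNG abN diagN D Nv Ga (pre := [::]) (w := w).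
rewrite cat0s; apply => //; last by rewrite size_map.
apply/negP => uw.
have := uniq_leq_size uw (s2 := enum 'I_n) (fun x _ => mem_enum _ x).
by rewrite size_enum_ord szw leqNgt nm.
Qed.

Lemma cs_ucn (gT : finGroupType) (G : {group gT}) k v hs :
  v \in 'Z_k(G) -> all (fun h => h \in G) hs -> k <= size hs -> cs v hs = 1.
Proof.
elim: hs k v => [|h t IH] [|k] v //=.
- by rewrite ucn0 => /set1P ->.
- by rewrite ucn0 => /set1P -> _ _; rewrite cs1.
move=> Zv /andP[Gh Gt] le; rewrite cs_cons; apply: (IH k) => //.
move: Zv; rewrite ucnSnR inE => /andP[_ sub].
apply: (subsetP sub); apply: mem_commg => //; exact: set11.
Qed.

Lemma ucn_cs (gT : finGroupType) (G : {group gT}) k v :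
  v \in G -> (forall hs, all (fun h => h \in G) hs -> size hs = k -> cs v hs = 1) ->
  v \in 'Z_k(G).
Proof.
elim: k v => [|k IH] v Gv H.
  by rewrite ucn0; have := H [::] isT erefl; rewrite cs_nil => ->; exact: set11.
rewrite ucnSnR inE Gv /= gen_subG; apply/subsetP => _ /imset2P[u y /set1P -> Gy ->].
apply: IH; first by rewrite groupR.
move=> hs Ghs sz; rewrite -cs_cons; apply: H => /=; first by rewrite Gy.
by rewrite sz.
Qed.

Lemma Dm_all (gT : finGroupType) (G N : {group gT}) n (a : 'I_n -> gT) :
  nilpotent G -> N \subset G -> G \subset 'N(N) -> abelian N ->
  (forall w k, w \in N -> k \in G -> [~ w, k, k] = 1) ->
  (forall i, a i \in G) -> G :=: <<[set a i | i : 'I_n]>> ->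
  forall m, n < m -> Dm G N m.
Proof.
move=> nilG sNG nNG abN diagN Ga hgen.
have [c Zc] := ucnP G nilG.
suff S : forall t m, c <= m + t -> n < m -> Dm G N m.
  by move=> m; apply: (S c); rewrite leq_addl.
elim=> [|t IH] m le nm.
  move=> v hs Nv Ghs sz; apply: (cs_ucn (G := G) (k := c)) => //.
    by have := subsetP sNG v Nv; rewrite -{1}Zc.
  by rewrite sz -(addn0 m).
apply: (cs_step nNG abN diagN Ga hgen nm); apply: IH.
  by rewrite addSnnS.
by apply: ltnW.
Qed.

Lemma Omega_set (gT : finGroupType) (G : {group gT}) :
  semi3abelian G -> group_set [set g in G | g ^+ 3 == 1].
Proof.
move=> sG; apply/group_setP; split; first by rewrite inE group1 expg1n eqxx.
move=> x y; rewrite !inE => /andP[Gx x3] /andP[Gy y3].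
by rewrite groupM //= sG // (eqP x3) (eqP y3) mulg1.
Qed.

Lemma N_facts (gT : finGroupType) (G : {group gT}) x :
  semi3abelian G -> x \in G -> x ^+ 3 = 1 ->
  [/\ <<x ^: G>> \subset G, G \subset 'N(<<x ^: G>>), abelian <<x ^: G>>
    & forall w k, w \in <<x ^: G>> -> k \in G -> [~ w, k, k] = 1].
Proof.
move=> sG Gx x3.
have gS := Omega_set sG.
have sNS : <<x ^: G>> \subset Group gS.
  rewrite gen_subG; apply/subsetP => _ /imsetP[g Gg ->].
  by rewrite inE groupJ //= -conjXg x3 conj1g eqxx.
have sSG : Group gS \subset G by apply/subsetP => y; rewrite inE => /andP[].
split.
- exact: subset_trans sNS sSG.
- exact: subset_trans (class_norm x G) (norm_gen _).
- rewrite abelian_gen; apply/centsP => _ /imsetP[b Gb ->] _ /imsetP[c Gc ->].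
  have -> : x ^ c = (x ^ b) ^ (b^-1 * c) by rewrite conjgM conjgK.
  apply: (semi_comm sG); rewrite ?groupJ ?groupM ?groupV //.
  by rewrite -conjXg x3 conj1g.
move=> w k Nw Gk; have := subsetP sNS w Nw; rewrite inE => /andP[Gw w3].
exact: (semi_diag sG Gw (eqP w3) Gk).
Qed.

Theorem lemma3p3 (gT : finGroupType) (G : {group gT}) (n : nat)
    (a : 'I_n -> gT) :
  3.-group G ->
  G :=: <<[set a i | i : 'I_n]>> ->
  semi3abelian G ->
  #|G / 'Phi(G)| = (3 ^ n)%N ->
  Omega1_3 G \subset 'Z_n.+1(G) /\
  (forall (i : 'I_n) (m : nat), (0 < m)%N ->
     a i ^+ m \in Omega1_3 G -> a i ^+ m \in 'Z_n(G)).
Proof.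
move=> pG hgen sG _.
have nilG : nilpotent G := pgroup_nil pG.
have Ga : forall i, a i \in G.
  by move=> i; rewrite hgen; apply: mem_gen; apply/imsetP; exists i.
have OmE : Omega1_3 G = [set g in G | g ^+ 3 == 1].
  by rewrite /Omega1_3 gen_set_id // Omega_set.
rewrite OmE; split.
  apply/subsetP => x; rewrite inE => /andP[Gx /eqP x3].
  have [sNG nNG abN diagN] := N_facts sG Gx x3.
  have D := Dm_all nilG sNG nNG abN diagN Ga hgen (ltnSn n).
  apply: ucn_cs => // hs Ghs sz; apply: D => //.
  by apply: mem_gen; exact: class_refl.
move=> i m _; rewrite inE => /andP[Gx /eqP x3].
set x := a i ^+ m in Gx x3 *.
have [sNG nNG abN diagN] := N_facts sG Gx x3.
have D := Dm_all nilG sNG nNG abN diagN Ga hgen (ltnSn n).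
have Nx : x \in <<x ^: G>> by apply: mem_gen; exact: class_refl.
have xa : [~ x, a i] = 1.
  by apply/eqP; rewrite commg1_sym /x commgXg.
apply: ucn_cs => //; apply: (cs_ext nNG abN D Nx Ga hgen) => w szw.
case iw: (i \in w).
  case/splitPr: iw szw => p1 p2 szw.
  rewrite map_cat /= (cs_front nNG abN diagN D Nx (Ga i) xa) ?all_map_in //.
  by move: szw; rewrite !size_cat /= !size_map.
have := cs_notuniq nNG abN diagN D Nx Ga (pre := [::]) (w := w).
rewrite cat0s; apply => //; last by rewrite size_map.
apply/negP => uw.
have sub : {subset w <= rem i (enum 'I_n)}.
  move=> j wj; rewrite mem_rem_uniq ?enum_uniq // inE mem_enum andbT.
  by apply: contraFN iw => /eqP <-.
have := uniq_leq_size uw sub.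
rewrite size_rem ?mem_enum // size_enum_ord szw.
have n0 : 0 < n := leq_ltn_trans (leq0n i) (ltn_ord i).
move=> le; lia.
Qed.
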